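(* For every integer $n > 3$, there exists a permutation $p$ of $\{1,2,\ldots,n\}$ such that the number of distinct patterns contained in $p$ is greater than $\dfrac{2^{\,n - 2\sqrt{n}}}{\sqrt{n}}$.
   Context: Two sequences of distinct integers $q = q_1 q_2 \cdots q_k$ and $r = r_1 r_2 \cdots r_k$ of the same length are identically ordered if for all $i,j$, $q_i < q_j \iff r_i < r_j$. For a permutation $p = p_1 p_2 \cdots p_n$, a subsequence is $p_{i_1} p_{i_2}\cdots p_{i_k}$ with $i_1 < i_2 < \cdots < i_k$. A permutation $p$ contains a pattern $q$ (a permutation of $\{1,\ldots,k\}$) if some subsequence of $p$ of length $k$ is identically ordered with $q$. The number of distinct patterns contained in $p$ is the number of permutations $q$ (of any length $k \ge 0$ or $k\ge 1$) contained in $p$. *)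

(* Defs.v *)
From mathcomp Require Import all_boot all_fingroup.
From Stdlib Require Import Reals.
Set Implicit Arguments. Unset Strict Implicit. Unset Printing Implicit Defensive.

(* A permutation p of {1,..,n} is encoded as p : {perm 'I_n}; its one-line
   notation is p 0, p 1, ..., p (n-1) (values shifted by 1, which does not
   affect relative order). *)

Definition contains (n k : nat) (p : {perm 'I_n}) (q : {perm 'I_k}) : bool :=
  [exists f : {ffun 'I_k -> 'I_n},
     [forall i : 'I_k, forall j : 'I_k, (i < j) ==> (f i < f j)] &&
     [forall i : 'I_k, forall j : 'I_k,
        (p (f i) < p (f j)) == (q i < q j)]].

(* number of distinct (nonempty) patterns contained in p; a pattern of length
   k > n can never be contained, so k ranges over 1..n. *)
Definition npatterns (n : nat) (p : {perm 'I_n}) : nat :=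
  \sum_(1 <= k < n.+1) #|[set q : {perm 'I_k} | contains p q]|.

(* Main.v *)
Require Import Defs.
From mathcomp Require Import all_boot all_fingroup.
From Stdlib Require Import Reals.
From mathcomp Require Import zify.
From Stdlib Require Import Lra Psatz.
Set Implicit Arguments. Unset Strict Implicit. Unset Printing Implicit Defensive.

Definition rk (T : finType) (g : T -> nat) (x : T) := #|[set y | g y < g x]|.

Lemma rk_lt (T : finType) (g : T -> nat) (ginj : injective g) x y :
  (rk g x < rk g y) = (g x < g y).
Proof.
have sub: forall u v, g u < g v -> rk g u < rk g v.
  move=> u v Huv; apply: proper_card; apply/properP; split.
    by apply/subsetP=> z; rewrite !inE => /ltn_trans; apply.
  by exists u; rewrite !inE ?Huv ?ltnn.
case: (ltngtP (g x) (g y)) => H.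
- by rewrite sub.
- by apply/negbTE; rewrite -leqNgt ltnW // sub.
- by rewrite (ginj _ _ H) ltnn.
Qed.

Lemma rk_bound (T : finType) (g : T -> nat) x : rk g x < #|T|.
Proof.
rewrite -cardsT; apply: proper_card; apply/properP; split; first exact: subsetT.
by exists x; rewrite !inE ?ltnn.
Qed.

Lemma rk_ltk k (g : 'I_k -> nat) i : rk g i < k.
Proof. by have := rk_bound g i; rewrite card_ord. Qed.

Definition rkfun k (g : 'I_k -> nat) (i : 'I_k) : 'I_k := Ordinal (rk_ltk g i).

Lemma rkfun_inj k (g : 'I_k -> nat) : injective g -> injective (rkfun g).
Proof.
move=> ginj x y /(congr1 val) /= H.
case: (ltngtP (g x) (g y)) => H2.
- by move: H2; rewrite -(rk_lt ginj) H ltnn.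
- by move: H2; rewrite -(rk_lt ginj) H ltnn.
- exact: ginj.
Qed.

Definition rkperm k (g : 'I_k -> nat) (ginj : injective g) : {perm 'I_k} :=
  perm (rkfun_inj ginj).

Lemma rkpermE k (g : 'I_k -> nat) (ginj : injective g) i j :
  (rkperm ginj i < rkperm ginj j) = (g i < g j).
Proof. by rewrite !permE /= rk_lt. Qed.

Definition key n b (t : 'I_n) : nat := (t %% b) * n + t %/ b.

Lemma divmod_uniq n a c a' c' : c < n -> c' < n -> a * n + c = a' * n + c' -> a = a' /\ c = c'.
Proof.
move=> hc hc' H.
have n0 : 0 < n by case: n hc {hc' H}.
have E1 := congr1 (fun x => x %/ n) H; have E2 := congr1 (fun x => x %% n) H.
move: E1 E2 => /=; rewrite !divnMDl // !modnMDl !divn_small // !modn_small //.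
by rewrite !addn0.
Qed.

Lemma divb_lt n b (t : 'I_n) : t %/ b < n.
Proof. exact: leq_ltn_trans (leq_div _ _) (ltn_ord t). Qed.

Lemma key_inj n b : injective (@key n b).
Proof.
move=> s t H; have [h1 h2] := divmod_uniq (divb_lt b s) (divb_lt b t) H.
by apply: val_inj; rewrite /= (divn_eq s b) (divn_eq t b) h1 h2.
Qed.

Definition pp n b : {perm 'I_n} := rkperm (@key_inj n b).

Lemma ppE n b s t : (pp n b s < pp n b t) = (key b s < key b t).
Proof. exact: rkpermE. Qed.

Definition sen n (x0 : 'I_n) (S : {set 'I_n}) (i : nat) : 'I_n := nth x0 (enum S) i.

Lemma enum_sorted n (S : {set 'I_n}) : sorted (fun x y : 'I_n => x < y) (enum S).
Proof.
rewrite -deprecated_filter_index_enum; apply: sorted_filter.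
  by move=> x y z; apply: ltn_trans.
rewrite /index_enum -?enumT /=.
have := iota_ltn_sorted 0 n; rewrite -val_enum_ord sorted_map.
by [].
Qed.

Lemma sen_incr n x0 (S : {set 'I_n}) i j :
  i < j -> j < #|S| -> sen x0 S i < sen x0 S j.
Proof.
move=> hij hj.
have := @sorted_ltn_nth _ (fun x y : 'I_n => x < y) (fun x y z => @ltn_trans _ _ _) x0 _ (enum_sorted S) i j.
rewrite !inE -cardE => H; apply: H => //; exact: ltn_trans hij hj.
Qed.

Lemma sen_in n x0 (S : {set 'I_n}) i : i < #|S| -> sen x0 S i \in S.
Proof. by move=> h; rewrite -mem_enum /sen mem_nth // -cardE. Qed.

Lemma sen_onto n x0 (S : {set 'I_n}) x : x \in S -> exists2 i, i < #|S| & sen x0 S i = x.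
Proof.
move=> h; exists (index x (enum S)); first by rewrite cardE index_mem mem_enum.
by rewrite /sen nth_index // mem_enum.
Qed.

Lemma incr_ltE k n (f : 'I_k -> 'I_n) : (forall i j : 'I_k, i < j -> f i < f j) ->
  forall i j : 'I_k, (f i < f j) = (i < j).
Proof.
move=> H i j; case: (ltngtP i j) => h.
- by rewrite H.
- by apply/negbTE; rewrite -leqNgt ltnW // H.
- by rewrite (val_inj h) ltnn.
Qed.

Lemma gq_inj k (h : 'I_k -> nat) : injective (fun j : 'I_k => h j * k + j).
Proof.
move=> x y /= H; apply: val_inj.
by have [_ ] := divmod_uniq (ltn_ord x) (ltn_ord y) H.
Qed.

Lemma lt_lex (a c k i j : nat) : a < c -> i < k -> a * k + i < c * k + j.
Proof. move=> h hi; nia. Qed.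

Definition pat n b x0 (S : {set 'I_n}) k : {perm 'I_k} :=
  rkperm (@gq_inj k (fun j => pp n b (sen x0 S j))).

Lemma patE n b x0 (S : {set 'I_n}) k (hk : #|S| = k) (i j : 'I_k) :
  (pat b x0 S k i < pat b x0 S k j) = (pp n b (sen x0 S i) < pp n b (sen x0 S j)).
Proof.
rewrite rkpermE.
set a := pp n b (sen x0 S i); set c := pp n b (sen x0 S j).
case: (ltngtP (nat_of_ord a) c) => h.
- exact: lt_lex h (ltn_ord i).
- by apply/negbTE; rewrite -leqNgt; apply: ltnW; apply: lt_lex h (ltn_ord j).
- have: sen x0 S i = sen x0 S j.
    by apply: (@perm_inj _ (pp n b)); apply: val_inj.
  rewrite /sen => /eqP; rewrite nth_uniq ?enum_uniq -?cardE ?hk // => /eqP/val_inj ->.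
  by rewrite h ltnn.
Qed.

Lemma pat_contains n b x0 (S : {set 'I_n}) k (hk : #|S| = k) :
  contains (pp n b) (pat b x0 S k).
Proof.
apply/existsP; exists [ffun i : 'I_k => sen x0 S i]; apply/andP; split.
  apply/forallP=> i; apply/forallP=> j; apply/implyP=> hij; rewrite !ffunE.
  by apply: sen_incr; rewrite // hk.
apply/forallP=> i; apply/forallP=> j; rewrite !ffunE.
by rewrite (patE _ _ hk).
Qed.


Lemma fix_step n k (mu : 'I_n -> nat) (muinj : injective mu) (c v : nat)
  (f f' : 'I_k -> 'I_n)
  (E : forall i j, (mu (f i) < mu (f j)) = (mu (f' i) < mu (f' j)))
  (Af' : forall v, v < c -> exists i, mu (f' i) = v)
  (IH : forall w, w < v -> forall i, (mu (f i) = w -> f i = f' i) /\ (mu (f' i) = w -> f i = f' i)) :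
  v < c -> forall i, mu (f i) = v -> f i = f' i.
Proof.
move=> vc i hi.
case: (ltngtP (mu (f' i)) v) => h.
- by have [_ ->] := IH _ h i.
- have [iv hiv] := Af' v vc.
  have : mu (f iv) < mu (f i) by rewrite E hiv.
  rewrite hi => hlt.
  have [e _] := IH _ hlt iv.
  by move: hlt; rewrite (e erefl) hiv ltnn.
- by apply: muinj; rewrite h hi.
Qed.

Lemma fix_lemma n k (mu : 'I_n -> nat) (muinj : injective mu) (c : nat)
  (f f' : 'I_k -> 'I_n)
  (E : forall i j, (mu (f i) < mu (f j)) = (mu (f' i) < mu (f' j)))
  (Af : forall v, v < c -> exists i, mu (f i) = v)
  (Af' : forall v, v < c -> exists i, mu (f' i) = v) :
  forall i, mu (f i) < c -> f i = f' i.
Proof.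
suff H : forall v, v < c -> forall i, (mu (f i) = v -> f i = f' i) /\ (mu (f' i) = v -> f i = f' i).
  by move=> i hi; have [-> //] := H _ hi i.
elim/ltn_ind => v IH vc i; split.
- apply: (fix_step muinj E Af') => // w wv j; apply: IH => //; exact: ltn_trans wv vc.
- move=> h; symmetry; move: h; apply: (fix_step muinj (c := c) (v := v) (f := f') (f' := f)) => //.
  + move=> w wv j; have [h1 h2] := IH _ wv (ltn_trans wv vc) j.
    by split=> h; symmetry; [apply: h2 | apply: h1].
Qed.

Definition mk b n (t : 'I_n) := (t < b) || (b %| t).


Lemma markfix n b (hb : 0 < b) (hbn : b <= n) k (f f' : 'I_k -> 'I_n)
  (fI : forall i j : 'I_k, i < j -> f i < f j)
  (fI' : forall i j : 'I_k, i < j -> f' i < f' j)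
  (Ep : forall i j, (pp n b (f i) < pp n b (f j)) = (pp n b (f' i) < pp n b (f' j)))
  (HM : forall t : 'I_n, mk b t -> (exists i, f i = t))
  (HM' : forall t : 'I_n, mk b t -> (exists i, f' i = t)) :
  forall i, mk b (f i) -> f i = f' i.
Proof.
move=> i /orP [h|h].
- apply: (@fix_lemma n k val val_inj b) => //.
  + by move=> i' j'; rewrite !incr_ltE.
  + move=> v vb; have vn : v < n by exact: leq_trans vb hbn.
    have [|j hj] := HM (Ordinal vn); first by rewrite /mk vb.
    by exists j; rewrite hj.
  + move=> v vb; have vn : v < n by exact: leq_trans vb hbn.
    have [|j hj] := HM' (Ordinal vn); first by rewrite /mk vb.
    by exists j; rewrite hj.
- have n0 : 0 < n by exact: leq_trans hb hbn.
  have Av : forall (g : 'I_k -> 'I_n), (forall t : 'I_n, mk b t -> (exists i, g i = t)) ->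
      forall v, v < ((n.-1) %/ b).+1 -> exists i, key b (g i) = v.
    move=> g Hg v; rewrite ltnS leq_divRL // => hv.
    have vn : v * b < n by rewrite (leq_ltn_trans hv) // prednK.
    have [|j hj] := Hg (Ordinal vn); first by rewrite /mk dvdn_mull ?orbT.
    by exists j; rewrite hj /key /= modnMl mulnK.
  apply: (@fix_lemma n k (key b) (@key_inj n b) ((n.-1) %/ b).+1) => //.
  + by move=> i' j'; rewrite -!ppE.
  + exact: Av.
  + exact: Av.
  + rewrite /key; move: h; rewrite /dvdn => /eqP ->; rewrite mul0n add0n ltnS.
    by apply: leq_div2r; rewrite -ltnS prednK.
Qed.

Lemma lex_help (c x y n : nat) : c * n < x * n + y -> y < n -> c <= x.
Proof. move=> h hy; nia. Qed.

Lemma dirs n b (hb : 0 < b) (hbn : b <= n) k (f f' : 'I_k -> 'I_n)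
  (fI : forall i j : 'I_k, i < j -> f i < f j)
  (fI' : forall i j : 'I_k, i < j -> f' i < f' j)
  (Ep : forall i j, (pp n b (f i) < pp n b (f j)) = (pp n b (f' i) < pp n b (f' j)))
  (HM' : forall t : 'I_n, mk b t -> (exists i, f' i = t))
  (MF : forall j, mk b (f' j) -> f j = f' j) i :
  ~~ mk b (f i) -> (f i %/ b <= f' i %/ b) /\ (f i %% b <= f' i %% b).
Proof.
move=> fr; split.
- set r := f i %/ b.
  have rn : r * b < n by exact: leq_ltn_trans (leq_trunc_div _ _) (ltn_ord (f i)).
  have [|j hj] := HM' (Ordinal rn); first by rewrite /mk dvdn_mull ?orbT.
  have hfj := MF j; rewrite hj in hfj; have {}hfj := hfj ltac:(by rewrite /mk dvdn_mull ?orbT).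
  rewrite leq_divRL //.
  have h1 : ~~ (f i < f j) by rewrite -leqNgt hfj /= leq_trunc_div.
  move: h1; rewrite incr_ltE // -(incr_ltE fI') hj /= -leqNgt.
  by [].
- set c := f i %% b.
  have cb : c < b by rewrite ltn_mod.
  have cn : c < n by exact: leq_trans cb hbn.
  have [|j hj] := HM' (Ordinal cn); first by rewrite /mk cb.
  have hfj := MF j; rewrite hj in hfj; have {}hfj := hfj ltac:(by rewrite /mk cb).
  have kt : key b (Ordinal cn) = c * n by rewrite /key /= modn_small // divn_small // addn0.
  have r1 : 0 < f i %/ b.
    by move: fr; rewrite /mk negb_or => /andP [h _]; rewrite divn_gt0 // leqNgt.
  have h1 : pp n b (f j) < pp n b (f i).
    by rewrite ppE hfj kt /key -/c; rewrite -[X in X < _]addn0 ltn_add2l.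
  move: h1; rewrite Ep hj ppE kt /key => h1.
  exact: lex_help h1 (divb_lt _ _).
Qed.

Lemma allfix n b (hb : 0 < b) (hbn : b <= n) k (f f' : 'I_k -> 'I_n)
  (fI : forall i j : 'I_k, i < j -> f i < f j)
  (fI' : forall i j : 'I_k, i < j -> f' i < f' j)
  (Ep : forall i j, (pp n b (f i) < pp n b (f j)) = (pp n b (f' i) < pp n b (f' j)))
  (HM : forall t : 'I_n, mk b t -> (exists i, f i = t))
  (HM' : forall t : 'I_n, mk b t -> (exists i, f' i = t)) :
  forall i, f i = f' i.
Proof.
have Ep' : forall i j, (pp n b (f' i) < pp n b (f' j)) = (pp n b (f i) < pp n b (f j)).
  by move=> i j; rewrite Ep.
have mf := markfix hb hbn fI fI' Ep HM HM'.
have mf' := markfix hb hbn fI' fI Ep' HM' HM.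
move=> i.
case: (boolP (mk b (f i))) => h1; first exact: mf.
case: (boolP (mk b (f' i))) => h2; first by rewrite (mf' i h2).
have MF : forall j, mk b (f' j) -> f j = f' j by move=> j /mf' ->.
have MF' : forall j, mk b (f j) -> f' j = f j by move=> j /mf ->.
have [d1 m1] := dirs hb hbn fI fI' Ep HM' MF h1.
have [d2 m2] := dirs hb hbn fI' fI Ep' HM MF' h2.
apply: val_inj; rewrite /= (divn_eq (f i) b) (divn_eq (f' i) b).
have -> : f i %/ b = f' i %/ b by apply/eqP; rewrite eqn_leq d1 d2.
have -> : f i %% b = f' i %% b by apply/eqP; rewrite eqn_leq m1 m2.
by [].
Qed.

Lemma set_inj n b (hb : 0 < b) (hbn : b <= n) (x0 : 'I_n) k (S S' : {set 'I_n})
  (hS : #|S| = k) (hS' : #|S'| = k)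
  (MS : forall t : 'I_n, mk b t -> t \in S) (MS' : forall t : 'I_n, mk b t -> t \in S')
  (E : pat b x0 S k = pat b x0 S' k) : S = S'.
Proof.
pose f := fun i : 'I_k => sen x0 S i.
pose f' := fun i : 'I_k => sen x0 S' i.
have fI : forall i j : 'I_k, i < j -> f i < f j.
  by move=> i j hij; apply: sen_incr; rewrite // hS.
have fI' : forall i j : 'I_k, i < j -> f' i < f' j.
  by move=> i j hij; apply: sen_incr; rewrite // hS'.
have Ep : forall i j, (pp n b (f i) < pp n b (f j)) = (pp n b (f' i) < pp n b (f' j)).
  by move=> i j; rewrite /f /f' -(patE _ _ hS) -(patE _ _ hS') E.
have img : forall (T : {set 'I_n}), #|T| = k -> forall t, t \in T -> exists i : 'I_k, sen x0 T i = t.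
  move=> T hT t /(sen_onto x0) [i hi <-]; rewrite hT in hi.
  by exists (Ordinal hi).
have HM : forall t : 'I_n, mk b t -> (exists i, f i = t) by move=> t /MS; apply: img.
have HM' : forall t : 'I_n, mk b t -> (exists i, f' i = t) by move=> t /MS'; apply: img.
have eq := allfix hb hbn fI fI' Ep HM HM'.
apply/setP => t; apply/idP/idP.
- move=> /(img _ hS) [i <-]; rewrite -/(f i) eq; apply: sen_in; rewrite hS'; exact: ltn_ord.
- move=> /(img _ hS') [i <-]; rewrite -/(f' i) -eq; apply: sen_in; rewrite hS; exact: ltn_ord.
Qed.


Lemma card_as_sum (T : finType) (P : pred T) : #|[set x | P x]| = \sum_x (P x : nat).
Proof.
rewrite -sum1_card big_mkcond /=; apply: eq_bigr => x _; rewrite inE; by case: (P x).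
Qed.

Lemma sum_eq1 n c : 0 < c <= n -> \sum_(1 <= k < n.+1) (c == k : nat) = 1.
Proof.
move=> hc.
rewrite (eq_bigr (fun k => if k == c then 1 else 0)); last by move=> k _; rewrite eq_sym; case: (k == c).
by rewrite -big_mkcond big_nat1_eq ltnS hc.
Qed.

Lemma card_le_inj n (S : {set 'I_n}) (g : 'I_n -> nat) c :
  {in S &, injective g} -> (forall t, t \in S -> g t < c) -> #|S| <= c.
Proof.
move=> ginj gc.
have -> : #|S| = size [seq g t | t <- enum S] by rewrite size_map cardE.
rewrite -(size_iota 0 c); apply: uniq_leq_size.
  rewrite map_inj_in_uniq ?enum_uniq //.
  by move=> x y; rewrite !mem_enum; apply: ginj.
move=> v /mapP [t]; rewrite mem_enum => /gc h ->.
by rewrite mem_iota add0n.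
Qed.

Definition MM n b := [set t : 'I_n | mk b t].

Lemma card_M n b (hb : 0 < b) (hbn : b <= n) : #|MM n b| <= b + (n.-1) %/ b.
Proof.
have n0 : 0 < n by exact: leq_trans hb hbn.
have -> : MM n b = [set t : 'I_n | t < b] :|: [set t : 'I_n | b %| t].
  by apply/setP => t; rewrite !inE.
rewrite cardsU.
have h1 : #|[set t : 'I_n | t < b]| <= b.
  apply: (@card_le_inj _ _ val) => [x y _ _|t]; [exact: val_inj | by rewrite inE].
have h2 : #|[set t : 'I_n | b %| t]| <= ((n.-1) %/ b).+1.
  apply: (@card_le_inj _ _ (fun t : 'I_n => t %/ b)).
    move=> x y; rewrite !inE => hx hy e; apply: val_inj.
    by rewrite /= -(divnK hx) -(divnK hy) e.
  move=> t _; rewrite ltnS; apply: leq_div2r; rewrite -ltnS prednK //.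
have h3 : 1 <= #|[set t : 'I_n | t < b] :&: [set t : 'I_n | b %| t]|.
  rewrite card_gt0; apply/set0Pn; exists (Ordinal n0); by rewrite !inE /= hb dvdn0.
move: h1 h2 h3; set x := #|_|; set y := #|_|; set z := #|_|. lia.
Qed.

Definition AA n b k := [set T : {set 'I_n} | (T \subset ~: MM n b) && (#|T :|: MM n b| == k)].

Lemma AA_le n b (hb : 0 < b) (hbn : b <= n) (x0 : 'I_n) k :
  #|AA n b k| <= #|[set q : {perm 'I_k} | contains (pp n b) q]|.
Proof.
rewrite -(@card_in_imset _ _ (fun T => pat b x0 (T :|: MM n b) k)).
  apply: subset_leq_card; apply/subsetP => q /imsetP [T]; rewrite inE => /andP [_ /eqP hT] ->.
  by rewrite inE; apply: pat_contains.
move=> T1 T2; rewrite !inE => /andP [s1 /eqP h1] /andP [s2 /eqP h2] e.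
have mkin : forall T (t : 'I_n), mk b t -> t \in T :|: MM n b.
  by move=> T t ht; rewrite !inE ht orbT.
have := set_inj hb hbn h1 h2 (mkin T1) (mkin T2) e => eU.
apply/setP => t.
case: (boolP (t \in MM n b)) => ht.
- have /negbTE -> : t \notin T1 by apply/negP => /(subsetP s1); rewrite inE ht.
  have /negbTE -> : t \notin T2 by apply/negP => /(subsetP s2); rewrite inE ht.
  by [].
- have : (t \in T1 :|: MM n b) = (t \in T2 :|: MM n b) by rewrite eU.
  by rewrite !inE; move: ht; rewrite inE => /negbTE ->; rewrite !orbF.
Qed.

Lemma sum_AA n b (hb : 0 < b) (hbn : b <= n) :
  \sum_(1 <= k < n.+1) #|AA n b k| = expn 2 #|~: MM n b|.
Proof.
have n0 : 0 < n by exact: leq_trans hb hbn.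
rewrite -card_powerset.
under eq_bigr => k _ do rewrite /AA card_as_sum.
rewrite exchange_big /= -[#|powerset _|]sum1_card [RHS]big_mkcond /=.
apply: eq_bigr => T _.
rewrite powersetE.
case: (boolP (T \subset ~: MM n b)) => hT /=.
- apply: sum_eq1; apply/andP; split; last by apply: leq_trans (max_card _) _; rewrite card_ord.
  rewrite card_gt0; apply/set0Pn; exists (Ordinal n0); by rewrite !inE /mk /= hb orbT.
- by rewrite big1.
Qed.


Lemma count_final n b (hb : 0 < b) (hbn : b <= n) :
  expn 2 (n - (b + (n.-1) %/ b)) <= npatterns (pp n b).
Proof.
have n0 : 0 < n by exact: leq_trans hb hbn.
apply: (@leq_trans (expn 2 #|~: MM n b|)).
  rewrite leq_pexp2l //.
  have := cardsC (MM n b); rewrite card_ord => e.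
  have := card_M hb hbn; lia.
rewrite -sum_AA // /npatterns; apply: leq_sum => k _.
exact: AA_le hb hbn (Ordinal n0) k.
Qed.

Lemma exists_b n : 0 < n -> exists b', n <= b'.+1 * b'.+1 /\ b' * b' < n /\ b'.+1 <= n.
Proof.
move=> n0.
have ex : exists b, n <= b * b by exists n; rewrite leq_pmull.
case: (ex_minnP ex) => b0 hb0 hmin.
case: b0 hb0 hmin => [|b'] hb0 hmin.
  by move: hb0; rewrite muln0 leqNgt n0.
exists b'; split => //; split.
  by rewrite ltnNge; apply/negP => /hmin; rewrite ltnn.
by apply: hmin; rewrite leq_pmull.
Qed.

Open Scope R_scope.


Lemma real_part (n b c m : nat) :
  leq 4 n -> leq n (muln b.+1 b.+1) -> leq (muln b b).+1 n -> leq (muln c b.+1).+1 n ->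
  leq n (addn m (addn b.+1 c)) ->
  Rpower 2 (INR n - 2 * sqrt (INR n)) / sqrt (INR n) < INR (expn 2 m).
Proof.
move=> h4 h1 h2 h3 h5.
have -> : @eq nat (expn 2 m) (Nat.pow 2 m) by clear; elim: m => //= m IH; rewrite expnS IH mulnE.
have R4 : 4 <= INR n.
  have H := le_INR 4 n (elimT leP h4); simpl in H. lra.
have R1 : INR n <= (INR b + 1) * (INR b + 1).
  by rewrite -S_INR -mult_INR; apply: le_INR; apply/leP.
have R2 : INR b * INR b < INR n.
  by rewrite -mult_INR; apply: lt_INR; apply/ltP.
have R3 : INR c * (INR b + 1) < INR n.
  by rewrite -S_INR -mult_INR; apply: lt_INR; apply/ltP.
have R5 : INR n <= INR m + (INR b + 1 + INR c).
  by rewrite -S_INR -!plus_INR; apply: le_INR; apply/leP.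
have Rb : 0 <= INR b by apply: pos_INR.
have Rc : 0 <= INR c by apply: pos_INR.
set r := sqrt (INR n).
have rr : r * r = INR n by rewrite /r sqrt_sqrt //; lra.
have r0 : 0 <= r by apply: sqrt_pos.
have r2 : 2 <= r by nra.
have rb : r <= INR b + 1 by nra.
have br : INR b < r by nra.
have cr : INR c < r by nra.
have key : INR n - 2 * r - 1 < INR m by lra.
rewrite pow_INR.
have -> : INR 2 = 2 by simpl; ring.
rewrite -Rpower_pow; last lra.
apply: (Rle_lt_trans _ (Rpower 2 (INR n - 2 * r - 1))).
  have -> : INR n - 2 * r - 1 = (INR n - 2 * r) + (- 1) by ring.
  rewrite Rpower_plus Rpower_Ropp Rpower_1; last lra.
  have hp : 0 < Rpower 2 (INR n - 2 * r) by apply: exp_pos.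
  apply: Rmult_le_compat_l; first lra.
  apply: Rinv_le_contravar; lra.
apply: Rpower_lt; lra.
Qed.


Close Scope R_scope.

Theorem theorem1 (n : nat) (hn : 3 < n) :
  exists p : {perm 'I_n},
    (Rpower 2 (INR n - 2 * sqrt (INR n)) / sqrt (INR n) < INR (npatterns p))%R.
Proof.
have n0 : (0 < n)%N by apply: ltn_trans hn.
have [b' [h1 [h2 h3]]] := exists_b n0.
exists (pp n b'.+1).
set c := (n.-1 %/ b'.+1)%N.
set m := (n - (b'.+1 + c))%N.
apply: (Rlt_le_trans _ (INR (expn 2 m))).
  apply: (@real_part n b' c m) => //.
  - have : (c * b'.+1 <= n.-1)%N by apply: leq_trunc_div.
    move: n0; clear; lia.
  - rewrite /m; lia.
apply: le_INR; apply/leP; exact: count_final.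
Qed.
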